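(* If an unbounded ballean $X$ has bounded growth, then $X$ contains a discrete subballean.
   Context: A ballean is a pair $(X,\mathcal E_X)$ where $X$ is a set and $\mathcal E_X$ is a family of subsets of $X\times X$ (entourages) such that: each $E\in\mathcal E_X$ contains the diagonal $\Delta_X$; for any $E,F\in\mathcal E_X$ there is $D\in\mathcal E_X$ with $E\circ F^{-1}\subset D$; and $\bigcup\mathcal E_X=X\times X$. For $E\subset X\times X$, $x\in X$, $A\subset X$: $E[x]=\{y:(x,y)\in E\}$, $E[A]=\bigcup_{a\in A}E[a]$. $B\subset X$ is bounded if $B\subset E[x]$ for some $E\in\mathcal E_X$, $x\in X$; $X$ is unbounded if $X$ itself is not bounded. A subballean on $Y\subset X$ is $(Y,\{(Y\times Y)\cap E:E\in\mathcal E_X\})$. A ballean $Y$ is discrete if $Y$ is unbounded and for every entourage $E$ of $Y$ there is a bounded $B_E\subset Y$ with $E[y]=\{y\}$ for all $y\in Y\setminus B_E$. $X$ has bounded growth if there is $G\subset X\times X$ with $G[B]$ bounded for all bounded $B\subset X$, and for each $E\in\mathcal E_X$ a bounded $B$ with $E[x]\subset G[x]$ for all $x\in X\setminus B$. *)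

(* Defs.v *)
Set Implicit Arguments.

Definition ents (X : Type) := (X -> X -> Prop) -> Prop.

Definition rcomp (X : Type) (E F : X -> X -> Prop) : X -> X -> Prop :=
  fun x z => exists y, E x y /\ F y z.

Definition rinv (X : Type) (F : X -> X -> Prop) : X -> X -> Prop :=
  fun x y => F y x.

Definition rsub (X : Type) (E F : X -> X -> Prop) : Prop :=
  forall x y, E x y -> F x y.

Definition is_ballean (X : Type) (EX : ents X) : Prop :=
  (forall E, EX E -> forall x, E x x) /\
  (forall E F, EX E -> EX F -> exists D, EX D /\ rsub (rcomp E (rinv F)) D) /\
  (forall x y : X, exists E, EX E /\ E x y).

Definition ball (X : Type) (E : X -> X -> Prop) (x : X) : X -> Prop := fun y => E x y.
Definition ballset (X : Type) (E : X -> X -> Prop) (A : X -> Prop) : X -> Prop :=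
  fun y => exists a, A a /\ E a y.

Definition bounded (X : Type) (EX : ents X) (B : X -> Prop) : Prop :=
  exists E x, EX E /\ forall y, B y -> ball E x y.

Definition unbounded (X : Type) (EX : ents X) : Prop :=
  ~ bounded EX (fun _ => True).

Definition sub_ents (X : Type) (EX : ents X) (Y : X -> Prop) : ents {x : X | Y x} :=
  fun R => exists E, EX E /\
    forall a b : {x : X | Y x}, R a b <-> E (proj1_sig a) (proj1_sig b).

Definition discrete (X : Type) (EX : ents X) : Prop :=
  unbounded EX /\
  forall E, EX E -> exists B, bounded EX B /\
    forall y, ~ B y -> forall z, ball E y z <-> z = y.

Definition bounded_growth (X : Type) (EX : ents X) : Prop :=
  exists G : X -> X -> Prop,
    (forall B, bounded EX B -> bounded EX (ballset G B)) /\
    (forall E, EX E -> exists B, bounded EX B /\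
       forall x, ~ B x -> forall y, ball E x y -> ball G x y).

(* Main.v *)
Require Import Defs.
From Stdlib Require Import Classical ProofIrrelevance.
From mathcomp Require classical_sets.
Set Implicit Arguments.

Section Aux.
Variables (X : Type) (EX : ents X).
Hypothesis H : is_ballean EX.

Lemma L_inv F : EX F -> exists D, EX D /\ rsub (rinv F) D.
Proof.
  intros HF. destruct H as [refl [comp _]].
  destruct (comp F F HF HF) as [D [HD sub]]. exists D; split; auto.
  intros x y Hxy. apply sub. exists x. split; [apply refl; auto| exact Hxy].
Qed.

Lemma L_union E1 E2 : EX E1 -> EX E2 -> exists D, EX D /\ rsub E1 D /\ rsub E2 D.
Proof.
  intros H1 H2. destruct (L_inv H2) as [D1 [HD1 s1]].
  destruct H as [refl [comp _]].
  destruct (comp E1 D1 H1 HD1) as [D [HD sub]]. exists D; split; [auto|split].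
  - intros x y Hxy. apply sub. exists y. split; [exact Hxy| exact (refl D1 HD1 y)].
  - intros x y Hxy. apply sub. exists x. split; [apply refl; auto|].
    unfold rinv. apply s1. exact Hxy.
Qed.

Lemma L_comp E F : EX E -> EX F -> exists D, EX D /\ rsub (rcomp E F) D.
Proof.
  intros HE HF. destruct (L_inv HF) as [D1 [HD1 s1]].
  destruct H as [refl [comp _]].
  destruct (comp E D1 HE HD1) as [D [HD sub]]. exists D; split; auto.
  intros x z [m [Hm1 Hm2]]. apply sub. exists m. split; auto.
  unfold rinv. apply s1. exact Hm2.
Qed.

Lemma ballset_bounded E B : EX E -> bounded EX B -> bounded EX (ballset E B).
Proof.
  intros HE [F [c [HF Hb]]]. destruct (L_comp HF HE) as [D [HD sub]].
  exists D, c; split; auto. intros y [a [Ba Ea]]. apply sub. exists a.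
  split; auto. apply Hb; auto.
Qed.

Lemma union_bounded B1 B2 : bounded EX B1 -> bounded EX B2 ->
  bounded EX (fun x => B1 x \/ B2 x).
Proof.
  intros [F1 [c1 [HF1 Hb1]]] [F2 [c2 [HF2 Hb2]]].
  destruct H as [refl [comp tot]].
  destruct (tot c1 c2) as [K [HK Kc]].
  destruct (L_comp HK HF2) as [D3 [HD3 s3]].
  destruct (L_union HF1 HD3) as [D [HD [sa sb]]].
  exists D, c1; split; auto. intros y [Hy|Hy].
  - apply sa. apply Hb1; auto.
  - apply sb, s3. exists c2. split; auto. apply Hb2; auto.
Qed.

Lemma sub_bounded (A : X -> Prop) (a0 : {x : X | A x}) C :
  bounded EX C -> bounded (sub_ents EX A) (fun a => C (proj1_sig a)).
Proof.
  intros [F [c [HF Hb]]].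
  destruct H as [refl [comp tot]].
  destruct (tot (proj1_sig a0) c) as [K [HK Kc]].
  destruct (L_comp HK HF) as [D [HD sub]].
  exists (fun a b : {x : X | A x} => D (proj1_sig a) (proj1_sig b)), a0.
  split.
  - exists D; split; auto. intros a b; tauto.
  - intros y Cy. unfold ball. apply sub. exists c. split; auto. apply Hb; auto.
Qed.

End Aux.

Theorem proposition3p6 (X : Type) (EX : ents X) :
  is_ballean EX -> unbounded EX -> bounded_growth EX ->
  exists Y : X -> Prop, discrete (sub_ents EX Y).
Proof.
  intros H Hunb [G [Gb Ge]].
  pose (P := fun Y : X -> Prop => forall y z, Y y -> Y z -> G y z -> G z y -> y = z).
  assert (HZ : forall F : (X -> Prop) -> Prop,
     classical_sets.subset F P -> classical_sets.total_on F classical_sets.subset ->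
     P (classical_sets.bigcup F (fun x => x))).
  { intros F FP Ft y z [Y1 F1 y1] [Y2 F2 z2] g1 g2.
    destruct (Ft _ _ F1 F2) as [s|s].
    - apply (FP _ F2); auto.
    - apply (FP _ F1); auto. }
  destruct (classical_sets.Zorn_bigcup HZ) as [A [PA maxA]].
  assert (cover : forall x, A x \/ exists y, A y /\ G y x).
  { intros x. destruct (classic (A x)) as [Ax|nAx]; [left; auto|right].
    apply NNPP; intros Hn. apply (maxA (fun z => A z \/ z = x)).
    - split.
      + intros t At; left; auto.
      + intros Hs. exact (nAx (Hs x (or_intror eq_refl))).
    - intros y z [Ay|ey] [Az|ez] g1 g2.
      + apply PA; auto.
      + subst z. exfalso; apply Hn; eauto.
      + subst y. exfalso; apply Hn; eauto.
      + congruence. }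
  exists A. split.
  - intros [E [a0 [[E0 [HE0 Hiff]] Hb]]]. apply Hunb.
    assert (bA : bounded EX A).
    { exists E0, (proj1_sig a0); split; auto. intros y Ay.
      unfold ball. apply (Hiff a0 (exist _ y Ay)). apply (Hb (exist _ y Ay)). exact I. }
    destruct (union_bounded H bA (Gb A bA)) as [D [c [HD Hb2]]].
    exists D, c; split; [exact HD|]. intros y _. apply Hb2.
    destruct (cover y) as [Ay|[a [Aa Ga]]]; [left; auto|right; exists a; auto].
  - intros R [E [HE Hiff]].
    destruct (L_inv H _ HE) as [D1 [HD1 s1]].
    destruct (L_union H _ _ HE HD1) as [E' [HE' [sa sb]]].
    destruct (Ge E' HE') as [B1 [HB1 HG]].
    pose (C := ballset E' B1).
    assert (bC : bounded EX C) by (apply ballset_bounded; auto).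
    assert (exA : exists a, A a).
    { destruct HB1 as [F [c _]].
      destruct (cover c) as [Ac|[a [Aa _]]]; eauto. }
    destruct exA as [a Aa]. pose (a0 := exist A a Aa).
    assert (refl := proj1 H).
    exists (fun a => C (proj1_sig a)). split.
    + apply (sub_bounded H A a0); auto.
    + intros y nCy z. unfold ball. rewrite Hiff. split.
      * intros Eyz.
        assert (n1 : ~ B1 (proj1_sig y)).
        { intros b; apply nCy. exists (proj1_sig y); split; auto. apply refl; auto. }
        assert (n2 : ~ B1 (proj1_sig z)).
        { intros b; apply nCy. exists (proj1_sig z); split; [auto|apply sb, s1; exact Eyz]. }
        assert (g1 : G (proj1_sig y) (proj1_sig z)) by (apply (HG _ n1); apply sa; auto).
        assert (g2 : G (proj1_sig z) (proj1_sig y)) by (apply (HG _ n2); apply sb, s1; auto).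
        destruct y as [y Ay], z as [z Az]. simpl in *.
        assert (e : y = z) by (apply PA; auto). subst z.
        f_equal. apply proof_irrelevance.
      * intros ->. apply refl; auto.
Qed.
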